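(* Let $p\ge1$. There is a constant $C>0$ depending only on $p$ such that for every $\mu$-complex $X\in\mathbb{R}^{n\times d}$ and every $\beta\in\mathbb{R}^d$, $$f(X\beta)\ge C\,\frac{n}{\mu}\,(1+\ln\mu),$$ i.e. $f(X\beta)=\Omega\!\left(\frac{n}{\mu}(1+\ln\mu)\right)$.
   Context: $\Phi_p(x)=\frac{p^{1-1/p}}{2\Gamma(1/p)}\int_{-\infty}^x \exp(-|t|^p/p)\,dt$, $g(r)=-\ln(\Phi_p(-r))$, and for $X$ with rows $x_i$, $f(X\beta)=\sum_{i=1}^n g(x_i\beta)$. $\mu_p(X)=\sup_{\beta\in\mathbb{R}^d\setminus\{0\}}\frac{\sum_{x_i\beta>0}|x_i\beta|^p}{\sum_{x_i\beta<0}|x_i\beta|^p}$, and $X$ is $\mu$-complex if $\mu_p(X)\le\mu<\infty$. *)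

(* Defs.v *)
From Stdlib Require Import Reals.
From Coquelicot Require Import Coquelicot.
Open Scope R_scope.

(* x^p for x >= 0, with the convention 0^p = 0 (p > 0). *)
Definition rpow (x p : R) : R := if Rlt_dec 0 x then Rpower x p else 0.

Fixpoint sumR (n : nat) (F : nat -> R) : R :=
  match n with O => 0 | S m => sumR m F + F m end.

Definition Gamma (s : R) : R :=
  RInt_gen (fun t => Rpower t (s - 1) * exp (- t)) (at_right 0) (Rbar_locally p_infty).

Definition Phi (p x : R) : R :=
  Rpower p (1 - 1 / p) / (2 * Gamma (1 / p)) *
  RInt_gen (fun t => exp (- rpow (Rabs t) p / p)) (Rbar_locally m_infty) (at_point x).

Definition g_loss (p r : R) : R := - ln (Phi p (- r)).

(* X : n x d matrix given by entries X i j (i < n, j < d); row x_i times beta. *)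
Definition rowmul (d : nat) (X : nat -> nat -> R) (beta : nat -> R) (i : nat) : R :=
  sumR d (fun j => X i j * beta j).

Definition f_loss (p : R) (n d : nat) (X : nat -> nat -> R) (beta : nat -> R) : R :=
  sumR n (fun i => g_loss p (rowmul d X beta i)).

Definition pos_part_sum (p : R) (n d : nat) X beta : R :=
  sumR n (fun i => if Rlt_dec 0 (rowmul d X beta i)
                   then rpow (Rabs (rowmul d X beta i)) p else 0).

Definition neg_part_sum (p : R) (n d : nat) X beta : R :=
  sumR n (fun i => if Rlt_dec (rowmul d X beta i) 0
                   then rpow (Rabs (rowmul d X beta i)) p else 0).

(* X is mu-complex: mu_p(X) = sup_{beta <> 0} pos/neg <= mu (mu a real number),
   written without division (a ratio c/0 with c > 0 counts as +oo). *)
Definition mu_complex (p : R) (n d : nat) (X : nat -> nat -> R) (mu : R) : Prop :=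
  forall beta : nat -> R, (exists j, (j < d)%nat /\ beta j <> 0) ->
    pos_part_sum p n d X beta <= mu * neg_part_sum p n d X beta.

(* Main.v *)
Require Import Defs.
From Stdlib Require Import Reals Lra Lia Classical.
From Coquelicot Require Import Coquelicot.
Open Scope R_scope.

Lemma ln_le' x y : 0 < x -> x <= y -> ln x <= ln y.
Proof. intros hx [h|<-]; [left; apply ln_increasing; lra| lra]. Qed.

Lemma exp_le' x y : x <= y -> exp x <= exp y.
Proof. intros [h|<-]; [left; apply exp_increasing; lra| lra]. Qed.

Lemma rpow_pos_eq x p : 0 < x -> rpow x p = Rpower x p.
Proof. intros; unfold rpow; destruct (Rlt_dec 0 x); [reflexivity| lra]. Qed.

Lemma rpow_nonpos_eq x p : x <= 0 -> rpow x p = 0.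
Proof. intros; unfold rpow; destruct (Rlt_dec 0 x); [lra| reflexivity]. Qed.

Lemma rpow_ge0 x p : 0 <= rpow x p.
Proof. unfold rpow; destruct (Rlt_dec 0 x); [unfold Rpower; left; apply exp_pos| lra]. Qed.

Lemma rpow_le_self x p : 1 <= p -> 0 <= x <= 1 -> rpow x p <= x.
Proof.
  intros hp hx. destruct (Req_dec x 0) as [->|hx0].
  - rewrite rpow_nonpos_eq; lra.
  - rewrite rpow_pos_eq by lra. unfold Rpower.
    assert (ln x <= 0) by (rewrite <- ln_1; apply ln_le'; lra).
    rewrite <- (exp_ln x) at 2 by lra. apply exp_le'. nra.
Qed.

Lemma rpow_mono a b p : 0 <= p -> 0 <= a <= b -> rpow a p <= rpow b p.
Proof.
  intros hp [ha hab]. destruct (Req_dec a 0) as [->|ha0].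
  - rewrite (rpow_nonpos_eq 0) by lra. apply rpow_ge0.
  - rewrite !rpow_pos_eq by lra. apply Rle_Rpower_l; lra.
Qed.

Lemma rpow_1 p : rpow 1 p = 1.
Proof. rewrite rpow_pos_eq by lra. unfold Rpower. rewrite ln_1, Rmult_0_r, exp_0. auto. Qed.

Lemma Rpower_tail_lin t r p : 1 <= p -> 0 < r <= t -> t * Rpower r (p-1) <= Rpower t p.
Proof.
  intros hp hr.
  replace (Rpower t p) with (Rpower t 1 * Rpower t (p-1)).
  - rewrite Rpower_1 by lra. apply Rmult_le_compat_l; [lra|]. apply Rle_Rpower_l; lra.
  - rewrite <- Rpower_plus. f_equal. ring.
Qed.

Definition phi (p t : R) : R := exp (- rpow (Rabs t) p / p).

Lemma phi_pos p t : 0 < phi p t.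
Proof. apply exp_pos. Qed.

Lemma phi_le1 p t : 1 <= p -> phi p t <= 1.
Proof.
  intros hp. unfold phi. rewrite <- exp_0. apply exp_le'.
  pose proof (rpow_ge0 (Rabs t) p).
  unfold Rdiv. assert (0 < / p) by (apply Rinv_0_lt_compat; lra). nra.
Qed.

Lemma phi_even p t : phi p (- t) = phi p t.
Proof. unfold phi. now rewrite Rabs_Ropp. Qed.

Lemma phi_decr p a b : 1 <= p -> 0 <= a <= b -> phi p b <= phi p a.
Proof.
  intros hp hab. unfold phi. apply exp_le'.
  rewrite !Rabs_pos_eq by lra.
  pose proof (rpow_mono a b p ltac:(lra) hab).
  unfold Rdiv. assert (0 < / p) by (apply Rinv_0_lt_compat; lra). nra.
Qed.

Lemma ball_R (x e y : R) : ball x e y <-> Rabs (y - x) < e.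
Proof. reflexivity. Qed.

Lemma phi_cont p t : 1 <= p -> continuous (phi p) t.
Proof.
  intros hp. destruct (Req_dec t 0) as [->|ht].
  - apply continuity_pt_filterlim. intros eps heps.
    exists (Rmin 1 eps). split. { apply Rmin_pos; lra. }
    intros x [_ hx]. simpl in hx |- *. unfold R_dist in hx |- *.
    rewrite Rminus_0_r in hx.
    unfold phi. rewrite Rabs_R0, (rpow_nonpos_eq 0) by lra.
    replace (- 0 / p) with 0 by (field; lra). rewrite exp_0.
    assert (h1 : Rabs x <= 1) by (pose proof (Rmin_l 1 eps); lra).
    assert (h2 : Rabs x < eps) by (pose proof (Rmin_r 1 eps); lra).
    pose proof (rpow_le_self (Rabs x) p hp (conj (Rabs_pos x) h1)).
    pose proof (rpow_ge0 (Rabs x) p).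
    set (u := rpow (Rabs x) p) in *.
    assert (hu : 0 <= u / p <= u).
    { split. apply Rdiv_le_0_compat; lra.
      unfold Rdiv. rewrite <- (Rmult_1_r u) at 2. apply Rmult_le_compat_l; [lra|].
      rewrite <- Rinv_1. apply Rinv_le_contravar; lra. }
    pose proof (exp_ineq1_le (- u / p)).
    assert (exp (- u / p) <= 1) by (rewrite <- exp_0; apply exp_le'; unfold Rdiv in *; lra).
    rewrite Rabs_left1 by lra. unfold Rdiv in *. lra.
  - apply continuous_ext_loc with (g := fun y => exp (- exp (p * ln (Rabs y)) / p)).
    + assert (hpos : 0 < Rabs t) by (apply Rabs_pos_lt; auto).
      exists (mkposreal _ hpos). intros y hy. assert (hy2 : Rabs (y - t) < Rabs t) by exact hy.
      unfold phi. rewrite rpow_pos_eq. reflexivity.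
      assert (Rabs t - Rabs y <= Rabs (y - t)).
      { pose proof (Rabs_triang_inv t y). rewrite Rabs_minus_sym in H. lra. }
      lra.
    + apply (ex_derive_continuous (K := R_AbsRing) (V := R_NormedModule)). auto_derive. split; [auto|split; [apply Rabs_pos_lt; auto| auto]].
Qed.
Lemma ex_RInt_contR (f:R->R) a b : (forall z, Rmin a b <= z <= Rmax a b -> continuous f z) -> ex_RInt f a b.
Proof. apply (ex_RInt_continuous (V:=R_CompleteNormedModule)). Qed.

Lemma contR (f : R -> R) x : ex_derive f x -> continuous f x.
Proof. apply (ex_derive_continuous (K := R_AbsRing) (V := R_NormedModule)). Qed.

Lemma RInt_correctR (f : R -> R) a b : ex_RInt f a b -> is_RInt f a b (RInt f a b).
Proof. apply (RInt_correct (V:=R_CompleteNormedModule)). Qed.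
Lemma is_RInt_uniqueR (f : R -> R) a b l : is_RInt f a b l -> RInt f a b = l.
Proof. apply (is_RInt_unique (V:=R_CompleteNormedModule)). Qed.
Lemma RInt_constR a b (c : R) : RInt (fun _ => c) a b = (b - a) * c.
Proof. apply (RInt_const (V:=R_CompleteNormedModule)). Qed.
Lemma ex_RInt_constR a b (c : R) : ex_RInt (fun _ => c) a b.
Proof. apply (ex_RInt_const (V:=R_NormedModule)). Qed.
Lemma RInt_pointR a (f : R -> R) : RInt f a a = 0.
Proof. apply (RInt_point (V:=R_CompleteNormedModule)). Qed.
Lemma is_RInt_derivR (f df : R -> R) (a b : R) :
  (forall x : R, Rmin a b <= x <= Rmax a b -> is_derive f x (df x)) ->
  (forall x : R, Rmin a b <= x <= Rmax a b -> continuous df x) ->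
  is_RInt df a b (f b - f a).
Proof. apply (is_RInt_derive (V:=R_CompleteNormedModule)). Qed.
Lemma is_RInt_extR (f g : R -> R) a b l : (forall x : R, Rmin a b < x < Rmax a b -> f x = g x) ->
       is_RInt f a b l -> is_RInt g a b l.
Proof. apply (is_RInt_ext (V:=R_NormedModule)). Qed.
Lemma is_RInt_comp_oppR (f : R -> R) a b l : is_RInt f (- a) (- b) l -> is_RInt (fun y => - (f (- y))) a b l.
Proof. apply (is_RInt_comp_opp (V:=R_NormedModule)). Qed.
Lemma is_RInt_oppR (f : R -> R) a b l : is_RInt f a b l -> is_RInt (fun y => - (f y)) a b (- l).
Proof. apply (is_RInt_opp (V:=R_NormedModule)). Qed.
Lemma is_RInt_scalR (f : R -> R) a b k l : is_RInt f a b l -> is_RInt (fun y => k * (f y)) a b (k * l).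
Proof. apply (is_RInt_scal (V:=R_NormedModule)). Qed.

Definition F (p b : R) : R := RInt (phi p) 0 b.

Lemma ex_phi p a b : 1 <= p -> ex_RInt (phi p) a b.
Proof. intros hp. apply ex_RInt_contR. intros; apply phi_cont; auto. Qed.

Lemma F_diff p a b : 1 <= p -> RInt (phi p) a b = F p b - F p a.
Proof.
  intros hp. unfold F.
  assert (H : RInt (phi p) 0 a + RInt (phi p) a b = RInt (phi p) 0 b)
    by (apply (RInt_Chasles (V:=R_CompleteNormedModule)); apply ex_phi; auto).
  lra.
Qed.

Lemma F_odd p b : 1 <= p -> F p (- b) = - F p b.
Proof.
  intros hp. unfold F.
  assert (h1 : is_RInt (fun y => - (phi p (- y))) 0 b (RInt (phi p) 0 (- b))).
  { apply is_RInt_comp_oppR. replace (- 0) with 0 by ring. apply RInt_correctR, ex_phi; auto. }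
  assert (h2 : is_RInt (fun y => - (phi p y)) 0 b (- (RInt (phi p) 0 b))).
  { apply is_RInt_oppR. apply RInt_correctR, ex_phi; auto. }
  assert (h3 : is_RInt (fun y => - (phi p y)) 0 b (RInt (phi p) 0 (- b))).
  { eapply is_RInt_extR; [| exact h1]. intros x _. cbv beta. now rewrite phi_even. }
  apply is_RInt_uniqueR in h2. apply is_RInt_uniqueR in h3. rewrite <- h3, h2. reflexivity.
Qed.

Lemma RInt_phi_ge p a b : 1 <= p -> 0 <= a <= b -> (b - a) * phi p b <= RInt (phi p) a b.
Proof.
  intros hp hab.
  assert (RInt (fun _ => phi p b) a b <= RInt (phi p) a b).
  { apply RInt_le; try lra. apply ex_RInt_constR. apply ex_phi; auto.
    intros x hx. apply phi_decr; auto; lra. }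
  rewrite RInt_constR in H. exact H.
Qed.

Lemma RInt_phi_le p a b : 1 <= p -> a <= b -> RInt (phi p) a b <= b - a.
Proof.
  intros hp hab.
  assert (RInt (phi p) a b <= RInt (fun _ => 1) a b).
  { apply RInt_le; try lra. apply ex_phi; auto. apply ex_RInt_constR.
    intros x hx. apply phi_le1; auto. }
  rewrite RInt_constR in H. lra.
Qed.

Lemma RInt_phi_ge0 p a b : 1 <= p -> a <= b -> 0 <= RInt (phi p) a b.
Proof.
  intros hp hab. apply RInt_ge_0; auto. apply ex_phi; auto. intros; left; apply phi_pos.
Qed.

Lemma F_mono p a b : 1 <= p -> a <= b -> F p a <= F p b.
Proof. intros hp hab. pose proof (RInt_phi_ge0 p a b hp hab). rewrite F_diff in H; auto. lra. Qed.

Lemma RInt_exp_lin c a b : 0 < c -> RInt (fun t => exp (- c * t)) a b = (exp (- c * a) - exp (- c * b)) / c.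
Proof.
  intros hc.
  apply is_RInt_uniqueR.
  replace ((exp (- c * a) - exp (- c * b)) / c) with ((- exp (- c * b) / c) - (- exp (- c * a) / c))
    by (field; lra).
  apply (is_RInt_derivR (fun t => - exp (- c * t) / c)).
  - intros x _. auto_derive; auto. field. lra.
  - intros x _. apply contR. auto_derive. auto.
Qed.

Lemma tail_bound p r b : 1 <= p -> 1 <= r <= b -> RInt (phi p) r b <= p * exp (- Rpower r p / p).
Proof.
  intros hp hrb.
  set (c := Rpower r (p - 1) / p).
  assert (hc1 : 1 <= Rpower r (p - 1)).
  { pose proof (Rle_Rpower r 0 (p - 1) ltac:(lra) ltac:(lra)). rewrite Rpower_O in H by lra. exact H. }
  assert (hc : 0 < c) by (unfold c; apply Rdiv_lt_0_compat; lra).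
  assert (RInt (phi p) r b <= RInt (fun t => exp (- c * t)) r b).
  { apply RInt_le; try lra. apply ex_phi; auto.
    apply ex_RInt_contR. intros; apply contR; auto_derive; auto.
    intros x hx. unfold phi. apply exp_le'. rewrite Rabs_pos_eq by lra. rewrite rpow_pos_eq by lra.
    pose proof (Rpower_tail_lin x r p hp ltac:(lra)).
    unfold c. unfold Rdiv. assert (0 < / p) by (apply Rinv_0_lt_compat; lra). nra. }
  rewrite RInt_exp_lin in H by auto.
  assert (e1 : - c * r = - Rpower r p / p).
  { unfold c. replace (Rpower r p) with (Rpower r 1 * Rpower r (p - 1)).
    rewrite Rpower_1 by lra. field; lra. rewrite <- Rpower_plus. f_equal; ring. }
  rewrite e1 in H.
  assert (0 < exp (- c * b)) by apply exp_pos.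
  assert ((exp (- Rpower r p / p) - exp (- c * b)) / c <= exp (- Rpower r p / p) / c).
  { unfold Rdiv. apply Rmult_le_compat_r. left; apply Rinv_0_lt_compat; auto. lra. }
  assert (exp (- Rpower r p / p) / c <= p * exp (- Rpower r p / p)).
  { unfold c. unfold Rdiv. rewrite Rinv_mult, Rinv_inv.
    assert (0 < / Rpower r (p - 1) <= 1).
    { split. apply Rinv_0_lt_compat; lra. pose proof (Rinv_le_contravar 1 _ ltac:(lra) hc1) as Hi. rewrite Rinv_1 in Hi. exact Hi. }
    pose proof (exp_pos (- Rpower r p * / p)).
    set (E := exp (- Rpower r p * / p)) in *. set (Q := / Rpower r (p - 1)) in *.
    assert (0 <= E * p * (1 - Q)) by (apply Rmult_le_pos; [apply Rmult_le_pos|]; lra). nra. }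
  lra.
Qed.

Lemma F_bound p b : 1 <= p -> F p b <= 1 + p.
Proof.
  intros hp. destruct (Rle_dec b 1).
  - destruct (Rle_dec 0 b).
    + pose proof (RInt_phi_le p 0 b hp r0). unfold F. lra.
    + assert (F p b <= F p 0) by (apply F_mono; lra). unfold F in *. rewrite RInt_pointR in H. lra.
  - assert (h1 : F p b = F p 1 + RInt (phi p) 1 b) by (rewrite F_diff; auto; ring).
    pose proof (RInt_phi_le p 0 1 hp ltac:(lra)).
    pose proof (tail_bound p 1 b hp ltac:(lra)).
    assert (exp (- Rpower 1 p / p) <= 1).
    { assert (e1 : Rpower 1 p = 1) by (unfold Rpower; rewrite ln_1, Rmult_0_r, exp_0; auto).
      rewrite e1. assert (0 < / p) by (apply Rinv_0_lt_compat; lra).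
      pose proof (exp_le' (- 1 / p) 0 ltac:(unfold Rdiv; nra)) as He. rewrite exp_0 in He. exact He. }
    change (RInt (phi p) 0 1) with (F p 1) in H.
    assert (0 <= p * (1 - exp (- Rpower 1 p / p))) by (apply Rmult_le_pos; lra). lra.
Qed.
Lemma Fset_bound p : 1 <= p -> bound (fun y => exists b, y = F p b).
Proof. intros hp. exists (1 + p). intros y [b ->]. apply F_bound; auto. Qed.

Lemma Fset_ne p : exists y, (fun y => exists b, y = F p b) y.
Proof. exists (F p 0). exists 0. reflexivity. Qed.

Definition Lv p (hp : 1 <= p) : R := proj1_sig (completeness _ (Fset_bound p hp) (Fset_ne p)).

Lemma L_lub p hp : is_lub (fun y => exists b, y = F p b) (Lv p hp).
Proof. unfold Lv. destruct (completeness _ _ _). auto. Qed.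

Lemma L_ub p hp b : F p b <= Lv p hp.
Proof. destruct (L_lub p hp) as [H _]. apply H. exists b; auto. Qed.

Lemma L_least p hp M : (forall b, F p b <= M) -> Lv p hp <= M.
Proof. intros HM. destruct (L_lub p hp) as [_ H]. apply H. intros y [b ->]. auto. Qed.

Lemma L_approx p hp eps : 0 < eps -> exists b0, forall b, b0 <= b -> Lv p hp - eps < F p b <= Lv p hp.
Proof.
  intros he. destruct (Classical_Prop.classic (exists b0, Lv p hp - eps < F p b0)) as [[b0 Hb0]|Hn].
  - exists b0. intros b hb. split; [| apply L_ub]. pose proof (F_mono p b0 b hp hb). lra.
  - exfalso. assert (Lv p hp <= Lv p hp - eps); [| lra].
    apply L_least. intros b. destruct (Rle_dec (F p b) (Lv p hp - eps)); auto.
    exfalso. apply Hn. exists b. lra.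
Qed.

Lemma L_le p hp : Lv p hp <= 1 + p.
Proof. apply L_least. intros; apply F_bound; auto. Qed.

Lemma L_ge p hp : phi p 1 <= Lv p hp.
Proof.
  pose proof (RInt_phi_ge p 0 1 hp ltac:(lra)). change (RInt (phi p) 0 1) with (F p 1) in H.
  pose proof (L_ub p hp 1). lra.
Qed.

Lemma L_pos p hp : 0 < Lv p hp.
Proof. pose proof (L_ge p hp). pose proof (phi_pos p 1). lra. Qed.

Lemma tail_upper p hp r : 1 <= r -> Lv p hp - F p r <= p * exp (- Rpower r p / p).
Proof.
  intros hr. assert (Lv p hp <= F p r + p * exp (- Rpower r p / p)); [| lra].
  apply L_least. intros b. assert (0 <= p * exp (- Rpower r p / p)) by (pose proof (exp_pos (- Rpower r p / p)); nra).
  destruct (Rle_dec b r).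
  - pose proof (F_mono p b r hp r0). lra.
  - pose proof (tail_bound p r b hp ltac:(lra)). rewrite F_diff in H0 by auto. lra.
Qed.

Lemma tail_lower p hp s : 0 <= s -> phi p (s + 1) <= Lv p hp - F p s.
Proof.
  intros hs. pose proof (RInt_phi_ge p s (s + 1) hp ltac:(lra)). rewrite F_diff in H by auto.
  pose proof (L_ub p hp (s + 1)). lra.
Qed.

Lemma tail_pos p hp s : 0 <= s -> 0 < Lv p hp - F p s.
Proof. intros hs. pose proof (tail_lower p hp s hs). pose proof (phi_pos p (s + 1)). lra. Qed.
Lemma Phi_int p hp x :
  is_RInt_gen (phi p) (Rbar_locally m_infty) (at_point x) (Lv p hp + F p x).
Proof.
  unfold is_RInt_gen, filterlimi, filter_le, filtermapi.
  intros P [eps HP].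
  destruct (L_approx p hp eps (cond_pos eps)) as [b0 Hb0].
  apply (Filter_prod _ _ _ (fun a => a < - b0) (fun y => y = x)).
  - exists (- b0). auto.
  - reflexivity.
  - intros a y ha ->. exists (RInt (phi p) a x). split.
    + apply RInt_correctR, ex_phi; auto.
    + apply HP. change (Rabs (RInt (phi p) a x - (Lv p hp + F p x)) < eps).
      rewrite F_diff by auto.
      replace a with (- (- a)) by ring. rewrite F_odd by auto.
      destruct (Hb0 (- a) ltac:(lra)).
      rewrite Rabs_left1; lra.
Qed.

Definition Gint (p t : R) : R := Rpower t (1 / p - 1) * exp (- t).

Lemma Gint_cont p u : 0 < u -> continuous (Gint p) u.
Proof. intros hu. apply contR. unfold Gint, Rpower. auto_derive. auto. Qed.

Lemma subst_ident p y : 1 <= p -> 0 < y ->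
  Rpower y (p - 1) * Gint p (Rpower y p / p) = Rpower p (1 - 1 / p) * phi p y.
Proof.
  intros hp hy. unfold Gint, phi. rewrite Rabs_pos_eq by lra. rewrite rpow_pos_eq by lra.
  assert (hl : ln (Rpower y p / p) = p * ln y - ln p).
  { unfold Rdiv. rewrite ln_mult. rewrite ln_Rinv by lra. unfold Rpower. rewrite ln_exp. ring.
    unfold Rpower; apply exp_pos. apply Rinv_0_lt_compat; lra. }
  unfold Rpower at 1 2 4. rewrite hl.
  rewrite <- Rmult_assoc, <- exp_plus. unfold Rpower. f_equal.
  - f_equal. field. lra.
  - f_equal. unfold Rdiv. ring.
Qed.

Lemma subst_RInt p a b : 1 <= p -> 0 < a -> 0 < b ->
  RInt (Gint p) (Rpower a p / p) (Rpower b p / p) = Rpower p (1 - 1 / p) * (F p b - F p a).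
Proof.
  intros hp ha hb.
  assert (H := is_RInt_comp (V:=R_CompleteNormedModule) (Gint p) (fun t => Rpower t p / p)
                 (fun t => Rpower t (p - 1)) a b).
  assert (hpos : forall x, Rmin a b <= x <= Rmax a b -> 0 < x).
  { intros x hx. pose proof (Rmin_glb_lt a b 0 ha hb). lra. }
  assert (H' : is_RInt (fun y => Rpower y (p - 1) * Gint p (Rpower y p / p)) a b
                 (RInt (Gint p) (Rpower a p / p) (Rpower b p / p))).
  { apply H.
    - intros x hx. apply Gint_cont. unfold Rpower. apply Rdiv_lt_0_compat; [apply exp_pos| lra].
    - intros x hx. specialize (hpos x hx). split.
      + unfold Rpower. auto_derive; auto. 
        replace (p * ln x) with ((p - 1) * ln x + ln x) by ring. rewrite exp_plus, exp_ln by auto.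
        field. split; lra.
      + apply contR. unfold Rpower. auto_derive. auto. }
  assert (H2 : is_RInt (fun y => Rpower p (1 - 1 / p) * phi p y) a b
                 (RInt (Gint p) (Rpower a p / p) (Rpower b p / p))).
  { eapply is_RInt_extR; [| exact H']. intros x hx. apply subst_ident; auto.
    apply hpos. lra. }
  assert (H3 : is_RInt (fun y => Rpower p (1 - 1 / p) * phi p y) a b
                 (Rpower p (1 - 1 / p) * (F p b - F p a))).
  { apply is_RInt_scalR. rewrite <- F_diff by auto. apply RInt_correctR, ex_phi; auto. }
  apply is_RInt_uniqueR in H2. apply is_RInt_uniqueR in H3. congruence.
Qed.

Lemma Rpower_inv_p p x : 1 <= p -> 0 < x -> Rpower (Rpower x (1 / p)) p = x.
Proof. intros hp hx. rewrite Rpower_mult. replace (1 / p * p) with 1 by (field; lra). apply Rpower_1; auto. Qed.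

Lemma Rpower_pos x y : 0 < Rpower x y.
Proof. apply exp_pos. Qed.

Lemma Ginv_spec p x : 1 <= p -> 0 < x -> Rpower (Rpower (p * x) (1 / p)) p / p = x.
Proof. intros hp hx. rewrite Rpower_inv_p by nra. field. lra. Qed.

Lemma Rpower_p_inv p c1 : 1 <= p -> 0 < c1 -> Rpower (Rpower c1 p) (1 / p) = c1.
Proof. intros hp hc. rewrite Rpower_mult. replace (p * (1 / p)) with 1 by (field; lra). apply Rpower_1; auto. Qed.

Lemma Ginv_lt p x c1 : 1 <= p -> 0 < x -> 0 < c1 -> x < Rpower c1 p / p -> Rpower (p * x) (1 / p) < c1.
Proof.
  intros hp hx hc h. rewrite <- (Rpower_p_inv p c1 hp hc).
  apply Rlt_Rpower_l. apply Rdiv_lt_0_compat; lra.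
  split. nra. apply (Rmult_lt_compat_l p) in h; [|lra]. replace (p * (Rpower c1 p / p)) with (Rpower c1 p) in h by (field; lra). auto.
Qed.

Lemma Ginv_gt p y c1 : 1 <= p -> 0 < c1 -> Rpower c1 p / p < y -> c1 < Rpower (p * y) (1 / p).
Proof.
  intros hp hc h. rewrite <- (Rpower_p_inv p c1 hp hc).
  apply Rlt_Rpower_l. apply Rdiv_lt_0_compat; lra.
  split. apply Rpower_pos. apply (Rmult_lt_compat_l p) in h; [|lra]. replace (p * (Rpower c1 p / p)) with (Rpower c1 p) in h by (field; lra). auto.
Qed.

Lemma Gamma_int p hp :
  is_RInt_gen (Gint p) (at_right 0) (Rbar_locally p_infty) (Rpower p (1 - 1 / p) * Lv p hp).
Proof.
  set (c := Rpower p (1 - 1 / p)).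
  assert (hc : 0 < c) by apply Rpower_pos.
  unfold is_RInt_gen, filterlimi, filter_le, filtermapi.
  intros P [eps HP].
  set (e1 := eps / (2 * c)).
  assert (he1 : 0 < e1) by (unfold e1; apply Rdiv_lt_0_compat; [apply cond_pos| lra]).
  destruct (L_approx p hp e1 he1) as [b0 Hb0].
  set (b1 := Rmax b0 1).
  assert (hb1 : 0 < b1) by (unfold b1; pose proof (Rmax_r b0 1); lra).
  apply (Filter_prod _ _ _ (fun x => 0 < x < Rpower e1 p / p) (fun y => Rpower b1 p / p < y)).
  - assert (hd : 0 < Rpower e1 p / p) by (apply Rdiv_lt_0_compat; [apply Rpower_pos| lra]).
    exists (mkposreal _ hd). intros u hu h0. change (Rabs (u - 0) < Rpower e1 p / p) in hu.
    rewrite Rminus_0_r, Rabs_pos_eq in hu by lra. lra.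
  - exists (Rpower b1 p / p). auto.
  - intros x y [hx0 hx] hy. simpl.
    assert (hy0 : 0 < y) by (pose proof (Rpower_pos b1 p); assert (0 < Rpower b1 p / p) by (apply Rdiv_lt_0_compat; lra); lra).
    set (a := Rpower (p * x) (1 / p)). set (b := Rpower (p * y) (1 / p)).
    assert (ha : 0 < a) by apply Rpower_pos. assert (hb : 0 < b) by apply Rpower_pos.
    pose proof (subst_RInt p a b hp ha hb) as HS.
    unfold a, b in HS. rewrite !Ginv_spec in HS by auto. fold a b in HS.
    exists (RInt (Gint p) x y). split.
    + apply RInt_correctR. apply ex_RInt_contR. intros z hz. apply Gint_cont.
      pose proof (Rmin_glb_lt x y 0 hx0 hy0). lra.
    + apply HP. change (Rabs (RInt (Gint p) x y - c * Lv p hp) < eps). rewrite HS. fold c.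
      assert (hA : a < e1) by (apply Ginv_lt; auto).
      assert (hB : b1 < b) by (apply Ginv_gt; auto).
      pose proof (RInt_phi_ge0 p 0 a hp ltac:(lra)). pose proof (RInt_phi_le p 0 a hp ltac:(lra)).
      change (RInt (phi p) 0 a) with (F p a) in *.
      destruct (Hb0 b) as [h1 h2]. { unfold b1 in hB. pose proof (Rmax_l b0 1). lra. }
      replace (c * (F p b - F p a) - c * Lv p hp) with (c * ((F p b - Lv p hp) - F p a)) by ring.
      rewrite Rabs_mult, Rabs_pos_eq by lra.
      assert (Rabs (F p b - Lv p hp - F p a) < 2 * e1) by (apply Rabs_def1; lra).
      unfold e1 in H1. replace (pos eps) with (c * (2 * (eps / (2 * c)))) by (field; lra).
      apply Rmult_lt_compat_l; auto.
Qed.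


Lemma Gamma_eq p hp : Gamma (1 / p) = Rpower p (1 - 1 / p) * Lv p hp.
Proof.
  unfold Gamma.
  assert (E : RInt_gen (Gint p) (at_right 0) (Rbar_locally p_infty) = Rpower p (1 - 1 / p) * Lv p hp).
  { pose proof (Gamma_int p hp) as G.
    pose proof (Proper_StrongProper _ (at_right_proper_filter 0)) as P1.
    pose proof (Proper_StrongProper _ (Rbar_locally_filter p_infty)) as P2.
    pose proof (@is_RInt_gen_unique R_CompleteNormedModule _ _ P1 P2 _ _ G) as H.
    exact H. }
  unfold Gint in E. exact E.
Qed.

Lemma Phi_eq p hp x : Phi p x = (Lv p hp + F p x) / (2 * Lv p hp).
Proof.
  unfold Phi. rewrite (Gamma_eq p hp).
  assert (E : RInt_gen (phi p) (Rbar_locally m_infty) (at_point x) = Lv p hp + F p x).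
  { pose proof (Phi_int p hp x) as G.
    pose proof (Proper_StrongProper _ (Rbar_locally_filter m_infty)) as P1.
    pose proof (Proper_StrongProper _ (at_point_filter x)) as P2.
    exact (@is_RInt_gen_unique R_CompleteNormedModule _ _ P1 P2 _ _ G). }
  unfold phi in E. rewrite E.
  pose proof (L_pos p hp). pose proof (Rpower_pos p (1 - 1 / p)). field. lra.
Qed.
Lemma ln_le_minus1 x : 0 < x -> ln x <= x - 1.
Proof. intros hx. pose proof (exp_ineq1_le (ln x)). rewrite exp_ln in H by auto. lra. Qed.

Lemma F_nonneg p s : 1 <= p -> 0 <= s -> 0 <= F p s.
Proof. intros hp hs. apply RInt_phi_ge0; auto. Qed.

Lemma g_eq p (hp : 1 <= p) r : g_loss p r = - ln ((Lv p hp - F p r) / (2 * Lv p hp)).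
Proof.
  unfold g_loss. rewrite (Phi_eq p hp). rewrite F_odd by auto. reflexivity.
Qed.

Lemma g_ge_ln2 p (hp : 1 <= p) r : 0 <= r -> ln 2 <= g_loss p r.
Proof.
  intros hr. rewrite (g_eq p hp). pose proof (L_pos p hp). pose proof (tail_pos p hp r hr).
  pose proof (F_nonneg p r hp hr).
  assert (ln ((Lv p hp - F p r) / (2 * Lv p hp)) <= ln (/ 2)).
  { apply ln_le'. apply Rdiv_lt_0_compat; lra.
    apply (Rmult_le_reg_r (2 * Lv p hp)). lra. field_simplify; lra. }
  rewrite ln_Rinv in H2 by lra. lra.
Qed.

Lemma Rpower_shift_bound p s : 1 <= p -> 0 <= s -> Rpower (s + 1) p <= Rpower 2 p * (rpow s p + 1).
Proof.
  intros hp hs. set (m := Rmax s 1).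
  assert (hm : 1 <= m) by apply Rmax_r.
  assert (Rpower (s + 1) p <= Rpower (2 * m) p).
  { assert (s <= m) by apply Rmax_l. apply Rle_Rpower_l; [lra|]. split; lra. }
  rewrite <- Rpower_mult_distr in H by lra.
  assert (Rpower m p <= rpow s p + 1).
  { unfold m. destruct (Rle_dec s 1).
    - rewrite Rmax_right by auto. unfold Rpower; rewrite ln_1, Rmult_0_r, exp_0. pose proof (rpow_ge0 s p). lra.
    - rewrite Rmax_left by lra. rewrite rpow_pos_eq by lra. lra. }
  pose proof (Rpower_pos 2 p). nra.
Qed.

Lemma g_lowA p (hp : 1 <= p) : exists k C, 0 < k /\ 0 < C /\
  forall r, k * exp (- C * rpow (Rabs r) p) <= g_loss p r.
Proof.
  set (C := Rpower 2 p / p).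
  assert (hC : 0 < C) by (apply Rdiv_lt_0_compat; [apply Rpower_pos| lra]).
  exists (exp (- C) / (2 * (1 + p))), C. split; [apply Rdiv_lt_0_compat; [apply exp_pos| lra]|]. split; auto.
  intros r.
  assert (hk : exp (- C) / (2 * (1 + p)) * exp (- C * rpow (Rabs r) p) <= / 4).
  { assert (exp (- C) <= 1) by (rewrite <- exp_0; apply exp_le'; lra).
    assert (exp (- C * rpow (Rabs r) p) <= 1).
    { rewrite <- exp_0; apply exp_le'. pose proof (rpow_ge0 (Rabs r) p). nra. }
    pose proof (exp_pos (- C)). pose proof (exp_pos (- C * rpow (Rabs r) p)).
    unfold Rdiv. assert (/ (2 * (1 + p)) <= / 4) by (apply Rinv_le_contravar; lra).
    assert (0 < / (2 * (1 + p))) by (apply Rinv_0_lt_compat; lra).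
    assert (0 <= exp (- C) * / (2 * (1 + p)) <= / 4).
    { split. nra. assert (exp (- C) * / (2 * (1 + p)) <= 1 * / 4) by (apply Rmult_le_compat; lra). lra. }
    nra. }
  destruct (Rle_dec 0 r) as [hr|hr].
  - pose proof (g_ge_ln2 p hp r hr). pose proof ln_lt_2. lra.
  - set (s := - r). assert (hs : 0 < s) by (unfold s; lra).
    rewrite (g_eq p hp). replace r with (- s) by (unfold s; ring). rewrite F_odd by auto.
    rewrite Rabs_Ropp, Rabs_pos_eq by lra.
    pose proof (L_pos p hp). pose proof (L_le p hp). pose proof (tail_pos p hp s ltac:(lra)).
    pose proof (tail_lower p hp s ltac:(lra)). pose proof (F_nonneg p s hp ltac:(lra)).
    set (y := (Lv p hp - F p s) / (2 * Lv p hp)).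
    assert (ey : (Lv p hp - - F p s) / (2 * Lv p hp) = 1 - y) by (unfold y; field; lra).
    rewrite ey.
    assert (hy : 0 < y <= / 2).
    { unfold y. split. apply Rdiv_lt_0_compat; lra.
      apply (Rmult_le_reg_r (2 * Lv p hp)). lra. field_simplify; lra. }
    assert (hln : - ln (1 - y) >= y) by (pose proof (ln_le_minus1 (1 - y) ltac:(lra)); lra).
    assert (hy2 : phi p (s + 1) / (2 * (1 + p)) <= y).
    { unfold y. apply Rle_trans with (phi p (s + 1) / (2 * Lv p hp)).
      - unfold Rdiv. apply Rmult_le_compat_l. left; apply phi_pos.
        apply Rinv_le_contravar; lra.
      - unfold Rdiv. apply Rmult_le_compat_r. left; apply Rinv_0_lt_compat; lra. lra. }
    assert (hphi : exp (- C) * exp (- C * rpow s p) <= phi p (s + 1)).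
    { unfold phi. rewrite <- exp_plus. apply exp_le'. rewrite Rabs_pos_eq by lra.
      rewrite (rpow_pos_eq (s + 1) p) by lra. pose proof (Rpower_shift_bound p s hp ltac:(lra)).
      unfold C. unfold Rdiv. assert (0 < / p) by (apply Rinv_0_lt_compat; lra).
      assert (Rpower (s + 1) p * / p <= Rpower 2 p * (rpow s p + 1) * / p) by (apply Rmult_le_compat_r; lra).
      lra. }
    assert (exp (- C) / (2 * (1 + p)) * exp (- C * rpow s p) <= phi p (s + 1) / (2 * (1 + p))).
    { unfold Rdiv. assert (0 < / (2 * (1 + p))) by (apply Rinv_0_lt_compat; lra). nra. }
    lra.
Qed.

Lemma g_large p (hp : 1 <= p) r : 1 <= r -> Rpower r p / p - (ln p + 1 / p) <= g_loss p r.
Proof.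
  intros hr. rewrite (g_eq p hp).
  pose proof (tail_upper p hp r hr). pose proof (tail_pos p hp r ltac:(lra)).
  pose proof (L_ge p hp). unfold phi in H1. rewrite Rabs_pos_eq, rpow_1 in H1 by lra.
  set (T := Lv p hp - F p r) in *. set (L := Lv p hp) in *.
  set (E := exp (- Rpower r p / p)) in *. set (E1 := exp (- (1) / p)) in *.
  assert (hE : 0 < E) by apply exp_pos. assert (hE1 : 0 < E1) by apply exp_pos.
  assert (T / (2 * L) <= p * E / (2 * E1)).
  { unfold Rdiv. apply Rmult_le_compat; try lra.
    left; apply Rinv_0_lt_compat; lra.
    apply Rinv_le_contravar; lra. }
  apply ln_le' in H2; [| apply Rdiv_lt_0_compat; lra].
  assert (ln (p * E / (2 * E1)) = ln p - Rpower r p / p - ln 2 + 1 / p).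
  { unfold Rdiv. rewrite ln_mult, ln_mult, ln_Rinv, ln_mult; try lra; try nra.
    unfold E, E1. rewrite !ln_exp. unfold Rdiv. ring.
    apply Rinv_0_lt_compat; nra. }
  pose proof ln_lt_2. lra.
Qed.

Lemma g_lowB p (hp : 1 <= p) : exists c, 0 < c /\ forall r, 0 < r -> c * Rpower r p <= g_loss p r.
Proof.
  set (K0 := ln p + 1 / p).
  assert (hK0 : 0 <= K0).
  { unfold K0. assert (0 <= ln p) by (rewrite <- ln_1; apply ln_le'; lra).
    assert (0 < 1 / p) by (apply Rdiv_lt_0_compat; lra). lra. }
  set (R0 := 2 * p * K0 + 1).
  assert (hR0 : 1 <= R0) by (unfold R0; nra).
  exists (Rmin (/ (2 * p)) (ln 2 / R0)). split.
  { apply Rmin_pos. apply Rinv_0_lt_compat; lra. apply Rdiv_lt_0_compat; [pose proof ln_lt_2; lra | lra]. }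
  intros r hr. pose proof (Rpower_pos r p) as hrp.
  destruct (Rle_dec (Rpower r p) R0) as [h|h].
  - pose proof (g_ge_ln2 p hp r ltac:(lra)).
    assert (Rmin (/ (2 * p)) (ln 2 / R0) * Rpower r p <= ln 2 / R0 * Rpower r p)
      by (apply Rmult_le_compat_r; [lra| apply Rmin_r]).
    assert (ln 2 / R0 * Rpower r p <= ln 2).
    { unfold Rdiv. rewrite Rmult_assoc. rewrite <- (Rmult_1_r (ln 2)) at 2. apply Rmult_le_compat_l.
      pose proof ln_lt_2; lra. apply (Rmult_le_reg_l R0); [lra|]. field_simplify; lra. }
    lra.
  - assert (hr1 : 1 <= r).
    { destruct (Rle_dec 1 r); auto. exfalso. pose proof (rpow_le_self r p hp ltac:(lra)).
      rewrite rpow_pos_eq in H by lra. lra. }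
    pose proof (g_large p hp r hr1). fold K0 in H.
    assert (Rmin (/ (2 * p)) (ln 2 / R0) * Rpower r p <= / (2 * p) * Rpower r p)
      by (apply Rmult_le_compat_r; [lra| apply Rmin_l]).
    assert (K0 <= Rpower r p / (2 * p)).
    { apply (Rmult_le_reg_l (2 * p)); [lra|]. field_simplify; [|lra]. unfold R0 in h. lra. }
    assert (Rpower r p / p = 2 * (Rpower r p / (2 * p))) by (field; lra).
    assert (/ (2 * p) * Rpower r p = Rpower r p / (2 * p)) by (field; lra).
    lra.
Qed.
Lemma exp_le'' x y : x <= y -> exp x <= exp y.
Proof. intros [h|<-]; [left; apply exp_increasing; lra| lra]. Qed.

Lemma sumR_le n (f g : nat -> R) : (forall i, (i < n)%nat -> f i <= g i) -> sumR n f <= sumR n g.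
Proof.
  induction n; simpl; intros H. lra.
  assert (sumR n f <= sumR n g) by (apply IHn; intros; apply H; lia).
  specialize (H n ltac:(lia)). lra.
Qed.

Lemma sumR_affine n (a b : R) (u : nat -> R) : sumR n (fun i => a + b * u i) = INR n * a + b * sumR n u.
Proof. induction n; cbn [sumR]. simpl; ring. rewrite IHn, S_INR. ring. Qed.

Lemma sumR_plus n (f g : nat -> R) : sumR n (fun i => f i + g i) = sumR n f + sumR n g.
Proof. induction n; simpl. ring. rewrite IHn. ring. Qed.

Lemma sumR_scal n (a : R) (f : nat -> R) : sumR n (fun i => a * f i) = a * sumR n f.
Proof. induction n; simpl. ring. rewrite IHn. ring. Qed.

Lemma sumR_ext n (f g : nat -> R) : (forall i, (i < n)%nat -> f i = g i) -> sumR n f = sumR n g.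
Proof.
  induction n; simpl; intros H. auto.
  rewrite IHn by (intros; apply H; lia). rewrite H by lia. auto.
Qed.

Lemma sumR_ge0 n (f : nat -> R) : (forall i, (i < n)%nat -> 0 <= f i) -> 0 <= sumR n f.
Proof.
  intros H. assert (sumR n (fun _ => 0) <= sumR n f) by (apply sumR_le; auto).
  assert (sumR n (fun _ : nat => 0) = 0).
  { clear. induction n; simpl. auto. rewrite IHn. ring. }
  lra.
Qed.

Lemma exp_tangent x y : exp y * (1 + (x - y)) <= exp x.
Proof.
  replace (exp x) with (exp y * exp (x - y)) by (rewrite <- exp_plus; f_equal; ring).
  apply Rmult_le_compat_l. left; apply exp_pos. apply exp_ineq1_le.
Qed.

Lemma jensen_exp n (u : nat -> R) C : (0 < n)%nat ->
  INR n * exp (- C * (sumR n u / INR n)) <= sumR n (fun i => exp (- C * u i)).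
Proof.
  intros hn. set (m := sumR n u / INR n).
  assert (hn' : 0 < INR n) by (apply lt_0_INR; auto).
  assert (sumR n (fun i => exp (- C * m) + (- C * exp (- C * m)) * (u i - m)) <= sumR n (fun i => exp (- C * u i))).
  { apply sumR_le. intros i _. pose proof (exp_tangent (- C * u i) (- C * m)). nra. }
  assert (E : sumR n (fun i => exp (- C * m) + (- C * exp (- C * m)) * (u i - m))
            = sumR n (fun i => (exp (- C * m) + C * exp (- C * m) * m) + (- C * exp (- C * m)) * u i)).
  { apply sumR_ext. intros. ring. }
  rewrite E, sumR_affine in H.
  replace (INR n * exp (- C * m)) with
     (INR n * (exp (- C * m) + C * exp (- C * m) * m) + - C * exp (- C * m) * sumR n u); auto.
  unfold m. field. lra.
Qed.

Lemma final_real c k C mu s N fv : 0 < c -> 0 < k -> 0 < C -> 0 < mu -> 0 <= s -> 0 <= N ->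
  N * (c * s) <= fv -> N * (k * exp (- C * (1 + mu) * s)) <= fv ->
  Rmin (c / (8 * C)) (k * exp (- / 2) / 2) * (N / mu) * (1 + ln mu) <= fv.
Proof.
  intros hc hk hC hmu hs hN h1 h2.
  set (K := Rmin (c / (8 * C)) (k * exp (- / 2) / 2)).
  assert (hK : 0 < K) by (apply Rmin_pos; [apply Rdiv_lt_0_compat; lra| pose proof (exp_pos (- / 2)); apply Rdiv_lt_0_compat; nra]).
  assert (hf0 : 0 <= fv) by (assert (0 <= N * (c * s)) by (apply Rmult_le_pos; nra); lra).
  assert (hNm : 0 <= N / mu) by (apply Rdiv_le_0_compat; lra).
  destruct (Rle_dec (1 + ln mu) 0) as [hl|hl].
  - assert (K * (N / mu) * (1 + ln mu) <= 0).
    { assert (0 <= K * (N / mu)) by (apply Rmult_le_pos; lra). nra. }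
    lra.
  - assert (hmu3 : 1 < 3 * mu).
    { assert (exp (- (1)) < mu).
      { rewrite <- (exp_ln mu) by auto. apply exp_increasing. lra. }
      assert (exp 1 * exp (- (1)) = 1) by (rewrite <- exp_plus; replace (1 + - (1)) with 0 by ring; apply exp_0).
      pose proof exp_le_3. pose proof (exp_pos (- (1))). nra. }
    set (l := 1 + ln mu) in *.
    set (s1 := l / (2 * C * (1 + mu))).
    destruct (Rle_dec s1 s) as [hs1|hs1].
    +
      assert (K <= c / (8 * C)) by apply Rmin_l.
      assert (c * s1 >= c / (8 * C) * (l / mu)).
      { unfold s1. apply Rle_ge.
        replace (c * (l / (2 * C * (1 + mu)))) with ((c / (8 * C) * (l / mu)) * (4 * mu / (1 + mu))) by (field; lra).
        rewrite <- (Rmult_1_r (c / (8 * C) * (l / mu))) at 1.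
        apply Rmult_le_compat_l. apply Rmult_le_pos; [left; apply Rdiv_lt_0_compat; lra| apply Rdiv_le_0_compat; lra].
        assert (4 * mu / (1 + mu) - 1 = (3 * mu - 1) / (1 + mu)) by (field; lra).
        assert (0 <= (3 * mu - 1) / (1 + mu)) by (apply Rdiv_le_0_compat; lra). lra. }
      assert (c * s1 <= c * s) by (apply Rmult_le_compat_l; lra).
      assert (K * (l / mu) <= c / (8 * C) * (l / mu)) by (apply Rmult_le_compat_r; [apply Rdiv_le_0_compat; lra| lra]).
      assert (K * (l / mu) <= c * s) by lra.
      assert (N * (K * (l / mu)) <= N * (c * s)) by (apply Rmult_le_compat_l; lra).
      replace (K * (N / mu) * l) with (N * (K * (l / mu))) by (field; lra). lra.
    + assert (hlt : C * (1 + mu) * s < l / 2).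
      { assert (s < s1) by lra. unfold s1 in H.
        apply (Rmult_lt_compat_l (2 * C * (1 + mu))) in H; [|nra].
        replace (2 * C * (1 + mu) * (l / (2 * C * (1 + mu)))) with l in H by (field; lra). nra. }
      assert (he : exp (- (l / 2)) <= exp (- C * (1 + mu) * s)) by (apply exp_le''; lra).
      assert (hv : l / (2 * mu) <= exp (- (l / 2)) * exp (/ 2)).
      { rewrite <- exp_plus. unfold l.
        replace (- ((1 + ln mu) / 2) + / 2) with (- (ln mu / 2)) by field.
        pose proof (exp_ineq1_le (ln mu / 2)).
        assert (exp (ln mu / 2) * exp (- (ln mu / 2)) = 1) by (rewrite <- exp_plus; replace (ln mu / 2 + - (ln mu / 2)) with 0 by ring; apply exp_0).
        assert (mu = exp (ln mu / 2) * exp (ln mu / 2)) by (rewrite <- exp_plus; replace (ln mu / 2 + ln mu / 2) with (ln mu) by field; rewrite exp_ln; auto).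
        pose proof (exp_pos (ln mu / 2)). pose proof (exp_pos (- (ln mu / 2))).
        apply (Rmult_le_reg_l (2 * mu)); [lra|].
        replace (2 * mu * ((1 + ln mu) / (2 * mu))) with (1 + ln mu) by (field; lra).
        assert (2 * mu * exp (- (ln mu / 2)) = 2 * exp (ln mu / 2)).
        { rewrite H1 at 1. transitivity (2 * exp (ln mu / 2) * (exp (ln mu / 2) * exp (- (ln mu / 2)))); [ring|]. rewrite H0. ring. }
        lra. }
      assert (K <= k * exp (- / 2) / 2) by apply Rmin_r.
      assert (hee : exp (- / 2) * exp (/ 2) = 1) by (rewrite <- exp_plus; replace (- / 2 + / 2) with 0 by ring; apply exp_0).
      assert (K * (l / mu) <= k * exp (- C * (1 + mu) * s)).
      { assert (l / mu <= 2 * exp (- (l / 2)) * exp (/ 2)).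
        { replace (l / mu) with (2 * (l / (2 * mu))) by (field; lra). lra. }
        assert (K * (l / mu) <= k * exp (- / 2) / 2 * (l / mu)) by (apply Rmult_le_compat_r; [apply Rdiv_le_0_compat; lra| lra]).
        assert (k * exp (- / 2) / 2 * (l / mu) <= k * exp (- / 2) / 2 * (2 * exp (- (l / 2)) * exp (/ 2))).
        { apply Rmult_le_compat_l; [pose proof (exp_pos (- / 2)); apply Rdiv_le_0_compat; nra| lra]. }
        assert (k * exp (- / 2) / 2 * (2 * exp (- (l / 2)) * exp (/ 2)) = k * exp (- (l / 2))).
        { replace (k * exp (- / 2) / 2 * (2 * exp (- (l / 2)) * exp (/ 2))) with (k * exp (- (l / 2)) * (exp (- / 2) * exp (/ 2))) by field.
          rewrite hee. ring. }
        assert (k * exp (- (l / 2)) <= k * exp (- C * (1 + mu) * s)) by (apply Rmult_le_compat_l; lra).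
        lra. }
      assert (N * (K * (l / mu)) <= N * (k * exp (- C * (1 + mu) * s))) by (apply Rmult_le_compat_l; lra).
      replace (K * (N / mu) * l) with (N * (K * (l / mu))) by (field; lra). lra.
Qed.
Lemma rowmul_opp d X beta i : rowmul d X (fun j => - beta j) i = - rowmul d X beta i.
Proof. unfold rowmul. induction d; cbn [sumR]. ring. rewrite IHd. ring. Qed.

Lemma rowmul_zero d X beta i : (forall j, (j < d)%nat -> beta j = 0) -> rowmul d X beta i = 0.
Proof.
  unfold rowmul. induction d; cbn [sumR]; intros H. auto.
  rewrite IHd by (intros; apply H; lia). rewrite (H d) by lia. ring.
Qed.

Lemma pos_opp p n d X beta : pos_part_sum p n d X (fun j => - beta j) = neg_part_sum p n d X beta.
Proof.
  unfold pos_part_sum, neg_part_sum. apply sumR_ext. intros i _. rewrite rowmul_opp, Rabs_Ropp.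
  destruct (Rlt_dec 0 (- rowmul d X beta i)); destruct (Rlt_dec (rowmul d X beta i) 0); auto; lra.
Qed.

Lemma neg_opp p n d X beta : neg_part_sum p n d X (fun j => - beta j) = pos_part_sum p n d X beta.
Proof.
  unfold pos_part_sum, neg_part_sum. apply sumR_ext. intros i _. rewrite rowmul_opp, Rabs_Ropp.
  destruct (Rlt_dec (- rowmul d X beta i) 0); destruct (Rlt_dec 0 (rowmul d X beta i)); auto; lra.
Qed.

Lemma split_sum p n d X beta :
  sumR n (fun i => rpow (Rabs (rowmul d X beta i)) p) = pos_part_sum p n d X beta + neg_part_sum p n d X beta.
Proof.
  unfold pos_part_sum, neg_part_sum. rewrite <- sumR_plus. apply sumR_ext. intros i _.
  destruct (Rlt_dec 0 (rowmul d X beta i)); destruct (Rlt_dec (rowmul d X beta i) 0); try lra.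
  assert (rowmul d X beta i = 0) by lra. rewrite H, Rabs_R0, rpow_nonpos_eq by lra. ring.
Qed.

Lemma pos_ge0 p n d X beta : 0 <= pos_part_sum p n d X beta.
Proof.
  unfold pos_part_sum. apply sumR_ge0. intros i _. destruct (Rlt_dec _ _). apply rpow_ge0. lra.
Qed.

Lemma neg_le p n d X mu beta : 0 <= mu -> mu_complex p n d X mu ->
  neg_part_sum p n d X beta <= mu * pos_part_sum p n d X beta.
Proof.
  intros hmu hmc.
  destruct (Classical_Prop.classic (exists j, (j < d)%nat /\ beta j <> 0)) as [[j [hj hb]]|hn].
  - rewrite <- (pos_opp p n d X beta), <- (neg_opp p n d X beta). apply hmc. exists j. split; auto. lra.
  - assert (hz : forall j, (j < d)%nat -> beta j = 0).
    { intros j hj. destruct (Req_dec (beta j) 0); auto. exfalso; apply hn; eauto. }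
    assert (neg_part_sum p n d X beta = 0).
    { unfold neg_part_sum. transitivity (sumR n (fun _ => 0)).
      apply sumR_ext. intros i _. rewrite rowmul_zero by auto. destruct (Rlt_dec 0 0); lra.
      clear. induction n; simpl; [auto| rewrite IHn; ring]. }
    rewrite H. pose proof (pos_ge0 p n d X beta). nra.
Qed.

Theorem lemma3 (p : R) (hp : 1 <= p) :
  exists C : R, 0 < C /\
    forall (n d : nat) (X : nat -> nat -> R) (mu : R),
      0 < mu -> mu_complex p n d X mu ->
      forall beta : nat -> R,
        f_loss p n d X beta >= C * (INR n / mu) * (1 + ln mu).
Proof.
  destruct (g_lowA p hp) as [k [C [hk [hC hA]]]].
  destruct (g_lowB p hp) as [c [hc hB]].
  exists (Rmin (c / (8 * C)) (k * exp (- / 2) / 2)). split.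
  { apply Rmin_pos; [apply Rdiv_lt_0_compat; lra| pose proof (exp_pos (- / 2)); apply Rdiv_lt_0_compat; nra]. }
  intros n d X mu hmu hmc beta. apply Rle_ge.
  set (a := fun i => rowmul d X beta i).
  set (Sp := pos_part_sum p n d X beta).
  set (Sn := neg_part_sum p n d X beta).
  assert (hSp : 0 <= Sp) by apply pos_ge0.
  assert (hSn : Sn <= mu * Sp) by (apply neg_le; auto; lra).
  assert (hU : sumR n (fun i => rpow (Rabs (a i)) p) = Sp + Sn) by apply split_sum.
  assert (hf : f_loss p n d X beta = sumR n (fun i => g_loss p (a i))) by reflexivity.
  assert (hg0 : forall r, 0 <= g_loss p r).
  { intros r. specialize (hA r). pose proof (exp_pos (- C * rpow (Rabs r) p)). nra. }
  destruct n as [|n'].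
  - rewrite hf. simpl. replace (0 / mu) with 0 by (field; lra). lra.
  - set (n := S n') in *.
    assert (hN : 0 < INR n) by (apply lt_0_INR; unfold n; lia).
    apply (final_real c k C mu (Sp / INR n) (INR n)); auto; try lra.
    + apply Rdiv_le_0_compat; lra.
    + replace (INR n * (c * (Sp / INR n))) with (c * Sp) by (field; lra).
      rewrite hf. unfold Sp, pos_part_sum. rewrite <- sumR_scal. apply sumR_le. intros i _.
      fold (a i). destruct (Rlt_dec 0 (a i)) as [h|h].
      * rewrite Rabs_pos_eq, rpow_pos_eq by lra. apply hB; auto.
      * rewrite Rmult_0_r. apply hg0.
    + apply Rle_trans with (k * sumR n (fun i => exp (- C * rpow (Rabs (a i)) p))).
      * pose proof (jensen_exp n (fun i => rpow (Rabs (a i)) p) C ltac:(unfold n; lia)) as J.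
        rewrite hU in J.
        assert (exp (- C * (1 + mu) * (Sp / INR n)) <= exp (- C * ((Sp + Sn) / INR n))).
        { apply exp_le''. 
          assert ((Sp + Sn) / INR n <= (1 + mu) * (Sp / INR n)).
          { unfold Rdiv. rewrite <- Rmult_assoc. apply Rmult_le_compat_r. left; apply Rinv_0_lt_compat; lra. lra. }
          nra. }
        assert (INR n * exp (- C * (1 + mu) * (Sp / INR n)) <= INR n * exp (- C * ((Sp + Sn) / INR n)))
          by (apply Rmult_le_compat_l; lra).
        nra.
      * rewrite hf, <- sumR_scal. apply sumR_le. intros i _. apply hA.
Qed.
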